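(* Suppose $m=n$, $\Xi=\{\boldsymbol{\xi}\in\mathbb{R}^m:\boldsymbol{a}_k^{\top}\boldsymbol{\xi}\le d_k,\ k=1,\dots,l\}$ with $\boldsymbol{a}_k\in\mathbb{R}^m$, $d_k>0$, and $f_t(\boldsymbol{x},\boldsymbol{\xi})=\boldsymbol{\xi}^{\top}\boldsymbol{x}+\langle\boldsymbol{A}^t,\boldsymbol{\xi}\boldsymbol{\xi}^{\top}\rangle+(\boldsymbol{b}^t)^{\top}\boldsymbol{x}+h^t$ for all $t\in[T]$, where $\boldsymbol{A}^t\succeq0$ is symmetric, $\boldsymbol{b}^t\in\mathbb{R}^n$, $h^t\in\mathbb{R}$. Let $\tilde Z_{C_2}$ be the set of $\boldsymbol{x}\in\mathbb{R}^n$ for which there exist $\alpha_t>0$, $q_{it}\ge0$, $\boldsymbol{v}_{it}\in\mathbb{R}^m$ ($i\in[N],t\in[T]$) with, for all $i,t$, $\|\boldsymbol{v}_{it}\|_*\delta+\frac1N\sum_{j=1}^Nq_{jt}\le\epsilon\alpha_t$ and $\sup_{\boldsymbol{\xi}\in\Xi}[\boldsymbol{v}_{it}^{\top}\boldsymbol{\xi}-f_t(\boldsymbol{x},\boldsymbol{\xi})]+\alpha_t-\boldsymbol{v}_{it}^{\top}\boldsymbol{\zeta}^i-q_{it}\le0$. Then $\tilde Z_{C_2}$ equals the set of $\boldsymbol{x}\in\mathbb{R}^n$ for which there exist $\alpha_t>0$, $q_{it}\ge0$, $\boldsymbol{v}_{it}\in\mathbb{R}^m$, $u_{it}\in\mathbb{R}$,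 $\nu^{it}_k\ge0$ ($i\in[N],t\in[T],k\in[l]$) such that for all $i\in[N],t\in[T]$: $$\|\boldsymbol{v}_{it}\|_*\delta+\frac1N\sum_{j=1}^Nq_{jt}\le\epsilon\alpha_t,\qquad u_{it}-[(\boldsymbol{b}^t)^{\top}\boldsymbol{x}+h^t]+\alpha_t-\boldsymbol{v}_{it}^{\top}\boldsymbol{\zeta}^i\le q_{it},$$ $$\begin{bmatrix}\boldsymbol{A}^t&-\frac12(\boldsymbol{v}_{it}-\boldsymbol{x}-\sum_{k=1}^l\nu^{it}_k\boldsymbol{a}_k)\\-\frac12(\boldsymbol{v}_{it}-\boldsymbol{x}-\sum_{k=1}^l\nu^{it}_k\boldsymbol{a}_k)^{\top}&u_{it}-\sum_{k=1}^l\nu^{it}_kd_k\end{bmatrix}\succeq0.$$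
   Context: Setting: $\epsilon\in(0,1)$, $\delta>0$, $[T]=\{1,\dots,T\}$, $[l]=\{1,\dots,l\}$; $\boldsymbol{\zeta}^1,\dots,\boldsymbol{\zeta}^N\in\Xi$ given samples; $\|\cdot\|_*$ is the dual norm of a norm on $\mathbb{R}^m$; $\langle\boldsymbol{X},\boldsymbol{Y}\rangle=\mathrm{tr}(\boldsymbol{X}\boldsymbol{Y})$; $\succeq0$ denotes positive semidefiniteness. *)

(* Defs.v *)
From HB Require Import structures.
From mathcomp Require Import all_boot all_order all_algebra.
From mathcomp Require Import classical_sets reals constructive_ereal ereal.
Set Implicit Arguments. Unset Strict Implicit. Unset Printing Implicit Defensive.
Import Order.TTheory GRing.Theory Num.Theory.
Local Open Scope ring_scope.
Local Open Scope classical_set_scope.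

Definition dotv {R : realType} {m : nat} (u v : 'cV[R]_m) : R := (u^T *m v) 0 0.

Definition is_norm {R : realType} {m : nat} (nrm : 'cV[R]_m -> R) : Prop :=
  [/\ forall x, 0 <= nrm x,
      forall x, nrm x = 0 -> x = 0,
      forall (c : R) x, nrm (c *: x) = `|c| * nrm x
    & forall x y, nrm (x + y) <= nrm x + nrm y].

Definition dual_norm {R : realType} {m : nat} (nrm : 'cV[R]_m -> R)
    (v : 'cV[R]_m) : R :=
  sup [set dotv y v | y in [set y | nrm y <= 1]].

Definition psd {R : realType} {m : nat} (M : 'M[R]_m) : Prop :=
  M^T = M /\ forall z : 'cV[R]_m, 0 <= (z^T *m M *m z) 0 0.

Definition Xi {R : realType} {m l : nat} (a : 'I_l -> 'cV[R]_m) (d : 'I_l -> R)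
  : set 'cV[R]_m := [set xi | forall k, dotv (a k) xi <= d k].

(* f_t(x, xi) = xi^T x + <A, xi xi^T> + b^T x + h, with <X,Y> = tr(XY). *)
Definition fq {R : realType} {m : nat} (A : 'M[R]_m) (b : 'cV[R]_m) (h : R)
    (x xi : 'cV[R]_m) : R :=
  dotv xi x + \tr (A *m (xi *m xi^T)) + dotv b x + h.

Definition blockM {R : realType} {m : nat} (A : 'M[R]_m) (w : 'cV[R]_m) (s : R)
  : 'M[R]_(m + 1) :=
  block_mx A (- (2^-1) *: w) (- (2^-1) *: w^T) (s%:M : 'M[R]_1).

(* Main.v *)
Require Import Defs.
From HB Require Import structures.
From mathcomp Require Import all_boot all_order all_algebra.
From mathcomp Require Import classical_sets boolp reals constructive_ereal ereal.
From mathcomp Require Import ring lra.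
Import Order.TTheory GRing.Theory Num.Theory.
Local Open Scope ring_scope.
Local Open Scope classical_set_scope.

Section Lag.
Variable R : realType.
Variable m : nat.
Implicit Types (x y u v : 'cV[R]_m).

Lemma dotvE u v : dotv u v = \sum_i u i 0 * v i 0.
Proof. by rewrite /dotv mxE; apply: eq_bigr => i _; rewrite mxE. Qed.

Lemma dotv_comb (a : 'cV[R]_m) x y (t s : R) :
  dotv a (t *: x + s *: y) = t * dotv a x + s * dotv a y.
Proof.
rewrite !dotvE !mulr_sumr -big_split /=; apply: eq_bigr => i _.
rewrite !mxE; lra.
Qed.

Lemma dotv0 (a : 'cV[R]_m) : dotv a 0 = 0.
Proof. by rewrite dotvE big1 // => i _; rewrite mxE mulr0. Qed.

Definition concave (Q : 'cV[R]_m -> R) := forall x y (t : R), 0 <= t <= 1 ->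
  t * Q x + (1 - t) * Q y <= Q (t *: x + (1 - t) *: y).

Lemma lag_step (C : 'cV[R]_m -> Prop) (Q : 'cV[R]_m -> R) (a0 : 'cV[R]_m)
  (d0 S : R) :
  C 0 -> (forall x y t, 0 <= t <= 1 -> C x -> C y -> C (t *: x + (1 - t) *: y)) ->
  concave Q -> 0 < d0 ->
  (forall xi, C xi -> dotv a0 xi <= d0 -> Q xi <= S) ->
  exists mu, 0 <= mu /\ forall xi, C xi -> Q xi + mu * (d0 - dotv a0 xi) <= S.
Proof.
move=> C0 Cc Qc d0p H.
have key : forall x1 x2, C x1 -> C x2 -> dotv a0 x1 < d0 -> d0 < dotv a0 x2 ->
   (Q x2 - S) / (dotv a0 x2 - d0) <= (S - Q x1) / (d0 - dotv a0 x1).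
  move=> x1 x2 C1 C2 l1 l2.
  set p := d0 - dotv a0 x1; set q := dotv a0 x2 - d0.
  have pp : 0 < p by rewrite subr_gt0.
  have qp : 0 < q by rewrite subr_gt0.
  have pq : 0 < p + q by rewrite addr_gt0.
  set t := q / (p + q).
  have t01 : 0 <= t <= 1.
    apply/andP; split; first by rewrite divr_ge0 // ltW.
    by rewrite ler_pdivrMr // mul1r lerDr ltW.
  have e1 : 1 - t = p / (p + q).
    by rewrite /t; field; rewrite lt0r_neq0.
  have hx : dotv a0 (t *: x1 + (1 - t) *: x2) <= d0.
    rewrite dotv_comb e1 /t.
    have -> : dotv a0 x1 = d0 - p by rewrite /p; lra.
    have -> : dotv a0 x2 = d0 + q by rewrite /q; lra.
    rewrite le_eqVlt; apply/orP; left; apply/eqP; field; rewrite lt0r_neq0 //.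
  have hQ := le_trans (Qc x1 x2 t t01) (H _ (Cc _ _ _ t01 C1 C2) hx).
  rewrite e1 /t in hQ.
  have hQ' : q * Q x1 + p * Q x2 <= S * (p + q).
    have -> : q * Q x1 + p * Q x2 = (q / (p + q) * Q x1 + p / (p + q) * Q x2) * (p + q).
      by field; rewrite lt0r_neq0.
    by rewrite ler_pM2r.
  rewrite ler_pdivrMr // mulrAC ler_pdivlMr //.
  nra.
pose E := [set r : R | r = 0 \/ exists xi, [/\ C xi, d0 < dotv a0 xi &
             r = (Q xi - S) / (dotv a0 xi - d0)]].
have ubE : forall x1, C x1 -> dotv a0 x1 < d0 -> ubound E ((S - Q x1) / (d0 - dotv a0 x1)).
  move=> x1 C1 l1 r [->|[x2 [C2 l2 ->]]]; last exact: key.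
  by rewrite divr_ge0 // ?subr_ge0 ?H // ltW // subr_gt0.
have E0 : E !=set0 by exists 0; left.
have hs : has_sup E.
  split => //; exists ((S - Q 0) / (d0 - dotv a0 0)); apply: ubE => //.
  by rewrite dotv0.
exists (sup E); split.
  by apply: sup_upper_bound => //; left.
move=> xi Cxi.
case: (ltgtP (dotv a0 xi) d0) => hxi.
- have := ge_sup E0 (ubE _ Cxi hxi).
  rewrite ler_pdivlMr ?subr_gt0 //; lra.
- have : (Q xi - S) / (dotv a0 xi - d0) <= sup E.
    by apply: sup_upper_bound => //; right; exists xi.
  rewrite ler_pdivrMr ?subr_gt0 //; lra.
- by rewrite hxi subrr mulr0 addr0; apply: H => //; rewrite hxi.
Qed.
End Lag.
Arguments concave {R m}.
Arguments dotv_comb {R m}.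
Arguments dotv0 {R m}.

Section Lag2.
Variable R : realType.
Variable m : nat.

Lemma widen_lift l (i : 'I_l) : widen_ord (leqnSn l) i = lift ord_max i.
Proof. by apply/val_inj; rewrite /= /bump leqNgt ltn_ord. Qed.

Lemma lagrange_mult l : forall (a : 'I_l -> 'cV[R]_m) (d : 'I_l -> R),
  (forall k, 0 < d k) -> forall (Q : 'cV[R]_m -> R), concave Q -> forall S,
  (forall xi, (forall k, dotv (a k) xi <= d k) -> Q xi <= S) ->
  exists nu : 'I_l -> R, (forall k, 0 <= nu k) /\
    forall xi, Q xi + \sum_k nu k * (d k - dotv (a k) xi) <= S.
Proof.
elim: l => [|l IH] a d dp Q Qc S H.
  exists (fun _ => 0); split => // xi; rewrite big_ord0 addr0; apply: H.
  by case.
pose a' := fun i : 'I_l => a (widen_ord (leqnSn l) i).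
pose d' := fun i : 'I_l => d (widen_ord (leqnSn l) i).
pose C := fun xi => forall k, dotv (a' k) xi <= d' k.
have [mu [mu0 Hmu]] : exists mu, 0 <= mu /\ forall xi, C xi ->
     Q xi + mu * (d ord_max - dotv (a ord_max) xi) <= S.
  apply: lag_step => //.
  - by rewrite /C => k; rewrite dotv0; apply/ltW/dp.
  - rewrite /C => x y t /andP[t0 t1] Cx Cy k; rewrite dotv_comb.
    have := Cx k; have := Cy k; rewrite /a' /d'; set A1 := dotv _ x; set A2 := dotv _ y; set D := d _ => h1 h2.
    have -> : D = t * D + (1 - t) * D by ring.
    rewrite lerD // ler_wpM2l // subr_ge0 //.
  - move=> xi Cxi hl; apply: H => k.
    case: (unliftP ord_max k) => [j ->|->] //.
    by rewrite -widen_lift; apply: Cxi.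
pose Q' := fun xi => Q xi + mu * (d ord_max - dotv (a ord_max) xi).
have Q'c : concave Q'.
  move=> x y t t01; rewrite /Q' dotv_comb.
  have := Qc x y t t01; lra.
have [nu' [nu'0 Hnu']] := IH a' d' (fun k => dp _) Q' Q'c S Hmu.
exists (fun k => oapp nu' mu (unlift ord_max k)); split.
  by move=> k; case: (unlift ord_max k) => /=.
move=> xi; rewrite big_ord_recr /= unlift_none /=.
have := Hnu' xi; rewrite /Q'.
under eq_bigr => i _ do rewrite widen_lift liftK /= -!widen_lift.
rewrite -/a' -/d'; lra.
Qed.
End Lag2.

Section Aux.
Variable R : realType.
Variable m : nat.
Implicit Types (x y u v w : 'cV[R]_m) (A : 'M[R]_m).

Definition Bf A u v := (u^T *m A *m v) 0 0.

Lemma BfDl A (c : R) u1 u2 v : Bf A (c *: u1 + u2) v = c * Bf A u1 v + Bf A u2 v.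
Proof. by rewrite /Bf linearD linearZ /= !mulmxDl -!scalemxAl !mxE. Qed.

Lemma BfDr A (c : R) u v1 v2 : Bf A u (c *: v1 + v2) = c * Bf A u v1 + Bf A u v2.
Proof. by rewrite /Bf mulmxDr -!scalemxAr !mxE. Qed.

Lemma BfZl A (c : R) u v : Bf A (c *: u) v = c * Bf A u v.
Proof. by rewrite /Bf linearZ /= -!scalemxAl !mxE. Qed.

Lemma BfZr A (c : R) u v : Bf A u (c *: v) = c * Bf A u v.
Proof. by rewrite /Bf -!scalemxAr !mxE. Qed.

Lemma BfC A u v : A^T = A -> Bf A u v = Bf A v u.
Proof.
move=> sA; rewrite /Bf -[in LHS](trmxK (u^T *m A *m v)) mxE.
by rewrite !trmx_mul trmxK sA mulmxA.
Qed.

Lemma dotvC u v : dotv u v = dotv v u.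
Proof. by rewrite !dotvE; apply: eq_bigr => i _; rewrite mulrC. Qed.

Lemma dotvZr u v (c : R) : dotv u (c *: v) = c * dotv u v.
Proof. by rewrite !dotvE mulr_sumr; apply: eq_bigr => i _; rewrite mxE mulrCA. Qed.

Lemma dotvBl u v w : dotv (u - v) w = dotv u w - dotv v w.
Proof.
rewrite !dotvE -sumrB; apply: eq_bigr => i _; rewrite !mxE; ring.
Qed.

Lemma dotv_suml l (c : 'I_l -> R) (a : 'I_l -> 'cV[R]_m) w :
  dotv (\sum_k c k *: a k) w = \sum_k c k * dotv (a k) w.
Proof.
rewrite dotvE; under eq_bigr => i _ do rewrite summxE mulr_suml.
rewrite exchange_big; apply: eq_bigr => k _; rewrite dotvE mulr_sumr.
by apply: eq_bigr => i _; rewrite mxE mulrA.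
Qed.

Lemma tr_quad A xi : \tr (A *m (xi *m xi^T)) = Bf A xi xi.
Proof.
rewrite mulmxA mxtrace_mulC /Bf mulmxA /mxtrace big_ord1.
by [].
Qed.

Lemma quad_concave A w : psd A -> concave (fun xi => dotv w xi - Bf A xi xi).
Proof.
move=> [sA pA] x y t /andP[t0 t1].
have := pA (1 *: x + (-1) *: y); rewrite -/(Bf A _ _).
rewrite !BfDl !BfZl !BfDr !BfZr !(BfC _ y x sA) !dotv_comb.
have h1 : 0 <= t * (1 - t) by rewrite mulr_ge0 // subr_ge0.
move=> hp.
have := mulr_ge0 h1 hp; nra.
Qed.

End Aux.
Arguments Bf {R m}.

Lemma blockM_sym (R : realType) m (A : 'M[R]_m) w s : A^T = A -> (blockM A w s)^T = blockM A w s.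
Proof.
move=> sA; rewrite /blockM tr_block_mx sA !linearZ /= trmxK tr_scalar_mx.
by [].
Qed.

Lemma blockM_quad (R : realType) m (A : 'M[R]_m) w s y (tau : 'cV[R]_1) : A^T = A ->
  ((col_mx y tau)^T *m blockM A w s *m col_mx y tau) 0 0
  = Bf A y y - tau 0 0 * dotv w y + s * tau 0 0 ^+ 2.
Proof.
move=> sA; rewrite /blockM tr_col_mx mul_row_block mul_row_col.
rewrite !mulmxDl.
have addE : forall (M N : 'M[R]_1), (M + N) 0 0 = M 0 0 + N 0 0 by move=> *; rewrite mxE.
rewrite !addE -/(Bf A y y) !mxE !big_ord1 dotvE.
under eq_bigr => j _ do rewrite !mxE big_ord1 !mxE.
rewrite !mxE.
under [X in _ + (X * _ + _) = _]eq_bigr => j _ do rewrite !mxE.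
rewrite big_ord1 !mxE eqxx mulr1n.
set D := \sum_i w i 0 * y i 0.
have -> : \sum_j tau ord0 0 * (- 2^-1 * w j ord0) * y j 0 = tau 0 0 * (-2^-1) * D.
  by rewrite /D mulr_sumr; apply: eq_bigr => j _; rewrite mulrC mulrA mulrC !mulrA.
have -> : \sum_j y j 0 * (- 2^-1 * w j ord0) = (-2^-1) * D.
  by rewrite /D mulr_sumr; apply: eq_bigr => j _; rewrite mulrC mulrA mulrC !mulrA.
have -> : (ord0 : 'I_1) = 0 by [].
by field.
Qed.

Theorem proposition2 (R : realType) (m N T l : nat)
  (nrm : 'cV[R]_m -> R) (eps delta : R)
  (zeta : 'I_N -> 'cV[R]_m)
  (a : 'I_l -> 'cV[R]_m) (d : 'I_l -> R)
  (A : 'I_T -> 'M[R]_m) (b : 'I_T -> 'cV[R]_m) (h : 'I_T -> R) :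
  is_norm nrm ->
  0 < eps < 1 -> 0 < delta -> (0 < N)%N ->
  (forall k, 0 < d k) ->
  (forall i, Xi a d (zeta i)) ->
  (forall t, psd (A t)) ->
  [set x : 'cV[R]_m |
     exists (alpha : 'I_T -> R) (q : 'I_N -> 'I_T -> R)
            (v : 'I_N -> 'I_T -> 'cV[R]_m),
       (forall t, 0 < alpha t) /\ (forall i t, 0 <= q i t) /\
       (forall i t,
          dual_norm nrm (v i t) * delta + N%:R^-1 * (\sum_(j < N) q j t)
            <= eps * alpha t) /\
       (forall i t,
          (ereal_sup [set (dotv (v i t) xi - fq (A t) (b t) (h t) x xi)%:E
                      | xi in Xi a d]
           + (alpha t - dotv (v i t) (zeta i) - q i t)%:E <= 0)%E)]
  =
  [set x : 'cV[R]_m |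
     exists (alpha : 'I_T -> R) (q : 'I_N -> 'I_T -> R)
            (v : 'I_N -> 'I_T -> 'cV[R]_m) (u : 'I_N -> 'I_T -> R)
            (nu : 'I_N -> 'I_T -> 'I_l -> R),
       (forall t, 0 < alpha t) /\ (forall i t, 0 <= q i t) /\
       (forall i t k, 0 <= nu i t k) /\
       (forall i t,
          dual_norm nrm (v i t) * delta + N%:R^-1 * (\sum_(j < N) q j t)
            <= eps * alpha t) /\
       (forall i t,
          u i t - (dotv (b t) x + h t) + alpha t - dotv (v i t) (zeta i)
            <= q i t) /\
       (forall i t,
          psd (blockM (A t)
                 (v i t - x - \sum_(k < l) nu i t k *: a k)
                 (u i t - \sum_(k < l) nu i t k * d k)))].
Proof.
move=> _ _ _ _ dp _ Apsd.
have fqE : forall t x xi, fq (A t) (b t) (h t) x xi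
    = dotv x xi + Bf (A t) xi xi + dotv (b t) x + h t.
  by move=> t x xi; rewrite /fq tr_quad dotvC.
apply/seteqP; split => x /=.
- move=> [al [q [v [alp [q0 [hn hs]]]]]].
  pose S i t := dotv (b t) x + h t - al t + dotv (v i t) (zeta i) + q i t.
  have hex : forall p : 'I_N * 'I_T, exists nu : 'I_l -> R,
      (forall k, 0 <= nu k) /\ forall xi,
      (dotv (v p.1 p.2 - x) xi - Bf (A p.2) xi xi)
        + \sum_k nu k * (d k - dotv (a k) xi) <= S p.1 p.2.
    case=> i t /=.
    have [||nu [nu0 hnu]] := @lagrange_mult R m l a d dp (fun xi => dotv (v i t - x) xi - Bf (A t) xi xi) _ (S i t).
    - exact: quad_concave.
    - 2: by exists nu.
    move=> xi hxi.
    have := hs i t.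
    have hle : ((dotv (v i t) xi - fq (A t) (b t) (h t) x xi)%:E <=
        ereal_sup [set (dotv (v i t) xi0 - fq (A t) (b t) (h t) x xi0)%:E
                      | xi0 in Xi a d])%E.
      by apply: ereal_sup_ubound; exists xi.
    move=> h2; have := le_trans (leeD2r _ hle) h2.
    rewrite -EFinD lee_fin fqE dotvBl /S.
    lra.
  have /choice[nu hnu] := hex.
  exists al, q, v, S, (fun i t => nu (i, t)).
  split => //; split => //; split; first by move=> i t k; case: (hnu (i, t)).
  split => //; split; first by move=> i t; rewrite /S; lra.
  move=> i t; have [sA pA] := Apsd t.
  split; first exact: blockM_sym.
  move=> z; rewrite -(vsubmxK z) blockM_quad //.
  move: (usubmx z) (dsubmx z) => y tau; set c := tau 0 0.
  have [_ H] := hnu (i, t); move: H => /= H.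
  set w := v i t - x - _; set s := S i t - _.
  have hw : forall xi, dotv w xi = dotv (v i t - x) xi - \sum_k nu (i, t) k * dotv (a k) xi.
    by move=> xi; rewrite /w dotvBl dotv_suml.
  have [->|c0] := eqVneq c 0.
    by rewrite mul0r subr0 expr0n /= mulr0 addr0; apply: pA.
  have [y' ->] : exists y', y = c *: y' by exists (c^-1 *: y); rewrite scalerA divff // scale1r.
  rewrite BfZl !BfZr dotvZr hw /s.
  have := H y'.
  under eq_bigr => k _ do rewrite mulrBr.
  rewrite sumrB.
  set B := Bf _ y' y'; set D1 := dotv _ y'; set Sg := \sum_k _ * dotv _ _; set Sd := \sum_k _.
  move=> HH.
  have := mulr_ge0 (sqr_ge0 c) (ltac:(rewrite subr_ge0; exact HH) : 0 <= S i t - (D1 - B + (Sd - Sg))).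
  rewrite -/Sd; nra.
- move=> [al [q [v [u [nu [alp [q0 [nu0 [hn [hu hpsd]]]]]]]]]].
  exists al, q, v; split => //; split => //; split => // i t.
  have hb : (ereal_sup [set (dotv (v i t) xi - fq (A t) (b t) (h t) x xi)%:E
                      | xi in Xi a d] <= (u i t - (dotv (b t) x + h t))%:E)%E.
    apply: ge_ereal_sup => _ [xi hxi <-]; rewrite lee_fin fqE.
    have [sA _] := Apsd t.
    have [_ pM] := hpsd i t.
    have := pM (col_mx xi 1%:M); rewrite blockM_quad // !dotvBl dotv_suml.
    rewrite mxE eqxx mulr1n expr1n mulr1 mul1r.
    have hs : \sum_k nu i t k * dotv (a k) xi <= \sum_k nu i t k * d k.
      by apply: ler_sum => k _; apply: ler_wpM2l => //; apply: hxi.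
    lra.
  apply: le_trans (leeD2r _ hb) _; rewrite -EFinD lee_fin; have := hu i t; lra.
Qed.
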